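(* Define $$\Psi_e(t)=\begin{cases}\tfrac{e^2}{4}t^2,&0\leq t\leq2,\\ e^t,&t>2.\end{cases}$$ Then: (a) $\Psi_e$ is a Young's function, and there are constants $0<m<M<\infty$ with $m\Psi_e(t)\leq\cosh(t)-1\leq M\Psi_e(t)$ for all $t\geq0$. Hence $L^{\Psi_e}(0,\infty)=L^{\cosh-1}(0,\infty)$ with equivalent norms. (b) With the Luxemburg norm, the fundamental function of $L^{\Psi_e}(0,\infty)$ is $$\varphi_e(t)=\begin{cases}\tfrac{e}{2}t^{1/2},&t\geq e^{-2},\\ \dfrac{1}{-\log t},&0<t<e^{-2}.\end{cases}$$ (c) $M_{\Psi_e}(s)=\sup_{t>0}\varphi_e(st)/\varphi_e(t)$ equals $1$ for $0<s\leq1$ and $s^{1/2}$ for $s>1$. (d) Consequently the upper fundamental index of $L^{\Psi_e}(0,\infty)$, and hence of $L^{\cosh-1}(0,\infty)$, equals $\tfrac12$, and the lower fundamental index equals $0$.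
   Context: Young's function: a convex $\Psi:[0,\infty)\to[0,\infty]$ with $\Psi(0)=\lim_{u\to0+}\Psi(u)=0$, $\Psi(u)\to\infty$ as $u\to\infty$, and $\Psi$ non-constant on $(0,\infty)$. The Orlicz space $L^\Psi(0,\infty)$ consists of measurable $f$ with $\int_0^\infty\Psi(\lambda|f|)<\infty$ for some $\lambda>0$. The Luxemburg norm is $\|f\|=\inf\{k>0:\int\Psi(|f|/k)\leq1\}$. The fundamental function is $\varphi(t)=\|\chi_E\|$ for $E$ of Lebesgue measure $t$. With $M_\Psi(s)=\sup_{t>0}\varphi(st)/\varphi(t)$, the fundamental indices are $$\underline{\beta}=\sup_{0<s<1}\frac{\log M_\Psi(s)}{\log s},\qquad \overline{\beta}=\inf_{s>1}\frac{\log M_\Psi(s)}{\log s}.$$ *)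

(* Defs.v *)
From Stdlib Require Import Reals Lra.
Open Scope R_scope.

(* Young's function (finite-valued version; the paper allows values in [0,oo],
   a finite-valued function satisfying this is in particular a Young function). *)
Definition convex_on_nonneg (Psi : R -> R) : Prop :=
  forall x y l, 0 <= x -> 0 <= y -> 0 <= l <= 1 ->
    Psi (l * x + (1 - l) * y) <= l * Psi x + (1 - l) * Psi y.

Definition young_function (Psi : R -> R) : Prop :=
  convex_on_nonneg Psi /\
  (forall u, 0 <= u -> 0 <= Psi u) /\
  Psi 0 = 0 /\
  (forall eps, eps > 0 -> exists d, d > 0 /\ forall u, 0 < u < d -> Psi u < eps) /\
  (forall B, exists u0, u0 >= 0 /\ forall u, u >= u0 -> Psi u > B) /\
  (exists u v, 0 < u /\ 0 < v /\ Psi u <> Psi v).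

Definition is_glb (E : R -> Prop) (m : R) : Prop :=
  (forall x, E x -> m <= x) /\ (forall b, (forall x, E x -> b <= x) -> b <= m).

Definition Psi_e (t : R) : R :=
  if Rle_dec t 2 then (exp 1 ^ 2 / 4) * t ^ 2 else exp t.

Definition cosh_m1 (t : R) : R := cosh t - 1.

(* Luxemburg norm of the indicator of a set E with Lebesgue measure t > 0:
   int Psi(|chi_E|/k) = t * Psi(1/k), so
   ||chi_E|| = inf { k > 0 : t * Psi(1/k) <= 1 }. *)
Definition luxemburg_indicator_set (Psi : R -> R) (t : R) : R -> Prop :=
  fun k => 0 < k /\ t * Psi (/ k) <= 1.

Definition is_fundamental_function (Psi : R -> R) (phi : R -> R) : Prop :=
  forall t, 0 < t -> is_glb (luxemburg_indicator_set Psi t) (phi t).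

Definition is_dilation_function (phi : R -> R) (M : R -> R) : Prop :=
  forall s, 0 < s -> is_lub (fun r => exists t, 0 < t /\ r = phi (s * t) / phi t) (M s).

Definition is_lower_index (M : R -> R) (b : R) : Prop :=
  is_lub (fun r => exists s, 0 < s < 1 /\ r = ln (M s) / ln s) b.

Definition is_upper_index (M : R -> R) (b : R) : Prop :=
  is_glb (fun r => exists s, 1 < s /\ r = ln (M s) / ln s) b.

Definition phi_e (t : R) : R :=
  if Rle_dec (exp (-2)) t then (exp 1 / 2) * sqrt t else / (- ln t).

(* Main.v *)
Require Import Defs.
From Stdlib Require Import Reals Lra Psatz.
Open Scope R_scope.

Lemma exp_le x y : x <= y -> exp x <= exp y.
Proof. intros [H|H]; [left; apply exp_increasing; auto | subst; lra]. Qed.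

Lemma ln_le x y : 0 < x -> x <= y -> ln x <= ln y.
Proof. intros Hx [H|H]; [left; apply ln_increasing; auto | subst; lra]. Qed.

Lemma e_gt2 : 2 < exp 1.
Proof. pose proof (exp_ineq1 1 ltac:(lra)). lra. Qed.

Lemma exp2 : exp 2 = exp 1 ^ 2.
Proof. replace 2 with (1+1) by lra. rewrite exp_plus. simpl; ring. Qed.

Lemma Psi_le t : t <= 2 -> Psi_e t = exp 1 ^ 2 / 4 * t ^ 2.
Proof. intros H; unfold Psi_e; destruct (Rle_dec t 2); lra. Qed.

Lemma Psi_gt t : 2 < t -> Psi_e t = exp t.
Proof. intros H; unfold Psi_e; destruct (Rle_dec t 2); lra. Qed.

Lemma Psi_nonneg t : 0 <= Psi_e t.
Proof.
  destruct (Rle_dec t 2).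
  - rewrite Psi_le by auto. pose proof e_gt2. apply Rmult_le_pos; [|nra]. nra.
  - rewrite Psi_gt by lra. left; apply exp_pos.
Qed.

Lemma Psi_strict a b : 0 <= a -> a < b -> Psi_e a < Psi_e b.
Proof.
  intros Ha Hab. pose proof e_gt2.
  destruct (Rle_dec b 2).
  - rewrite !Psi_le by lra. assert (a^2 < b^2) by nra.
    assert (0 < exp 1 ^ 2 / 4) by nra. nra.
  - rewrite (Psi_gt b) by lra. destruct (Rle_dec a 2).
    + rewrite Psi_le by lra. rewrite <- exp2.
      apply Rle_lt_trans with (exp 2); [|apply exp_increasing; lra].
      rewrite exp2. assert (a^2 <= 4) by nra.
      assert (0 < exp 1 ^ 2) by nra. nra.
    + rewrite Psi_gt by lra. apply exp_increasing; lra.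
Qed.

Definition dPsi (x : R) := if Rle_dec x 2 then exp 1 ^ 2 / 2 * x else exp x.

Lemma Psi_tangent x y : 0 <= x -> 0 <= y -> Psi_e x + dPsi x * (y - x) <= Psi_e y.
Proof.
  intros Hx Hy. pose proof e_gt2 as He. unfold dPsi.
  destruct (Rle_dec x 2) as [Hx2|Hx2]; destruct (Rle_dec y 2) as [Hy2|Hy2].
  - rewrite !Psi_le by auto.
    assert (exp 1 ^ 2 / 4 * y ^ 2 - (exp 1 ^ 2 / 4 * x ^ 2 + exp 1 ^ 2 / 2 * x * (y - x)) = exp 1 ^ 2 / 4 * (y - x)^2) by field.
    assert (0 <= exp 1 ^ 2 / 4 * (y - x)^2) by (apply Rmult_le_pos; [pose proof (pow2_ge_0 (exp 1)); lra | apply pow2_ge_0]). lra.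
  - rewrite Psi_le by auto. rewrite Psi_gt by lra.
    assert (H1 : exp 1 ^ 2 * (y - 1) <= exp y).
    { replace y with (2 + (y - 2)) at 2 by ring. rewrite exp_plus, exp2.
      pose proof (exp_ineq1_le (y-2)). nra. }
    assert (H2: (x-2)*(x-2*y+2) >= 0) by nra. nra.
  - rewrite Psi_gt by lra. rewrite Psi_le by auto.
    set (u := x - 2).
    assert (Ea : exp x = exp 1 ^ 2 * exp u).
    { unfold u. replace x with (2 + (x-2)) at 1 by ring. rewrite exp_plus, exp2; ring. }
    assert (Eb : exp u * exp (- u) = 1). { rewrite <- exp_plus. replace (u + - u) with 0 by ring. apply exp_0. }
    pose proof (exp_ineq1_le (- u)). pose proof (exp_pos u). pose proof (exp_pos (-u)).
    assert (Hk : exp u * (y - 1 - u) <= y - 1).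
    { assert (y - 1 - u <= (y - 1) * exp (- u)).
      { destruct (Rle_dec 1 y).
        - assert (exp (-u) <= 1). { rewrite <- exp_0. apply exp_le; unfold u; lra. }
          unfold u in *; nra.
        - assert (exp (-u) <= 1). { rewrite <- exp_0. apply exp_le; unfold u; lra. }
          unfold u in *; nra. }
      assert (exp u * (y - 1 - u) <= exp u * ((y-1) * exp (-u))) by (apply Rmult_le_compat_l; lra).
      nra. }
    replace (exp x + exp x * (y - x)) with (exp 1 ^ 2 * (exp u * (y - 1 - u)))
      by (rewrite Ea; unfold u; ring).
    assert (y - 1 <= y^2/4) by nra.
    assert (exp 1 ^ 2 * (exp u * (y - 1 - u)) <= exp 1 ^ 2 * (y ^ 2 / 4)).
    { apply Rmult_le_compat_l; [apply pow2_ge_0| lra]. }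
    lra.
  - rewrite !Psi_gt by lra.
    replace y with (x + (y - x)) at 2 by ring. rewrite exp_plus.
    pose proof (exp_ineq1_le (y-x)). pose proof (exp_pos x). nra.
Qed.

Lemma Psi_convex : convex_on_nonneg Psi_e.
Proof.
  intros x y l Hx Hy Hl.
  set (z := l * x + (1 - l) * y).
  assert (Hz : 0 <= z) by (unfold z; nra).
  pose proof (Psi_tangent z x Hz Hx). pose proof (Psi_tangent z y Hz Hy).
  assert (l * (Psi_e z + dPsi z * (x - z)) + (1-l) * (Psi_e z + dPsi z * (y - z)) = Psi_e z) by (unfold z; ring).
  nra.
Qed.

Lemma exp_ge1 x : 0 <= x -> 1 <= exp x.
Proof. intros H. pose proof (exp_ineq1_le x). lra. Qed.

Lemma exp_le1 x : x <= 0 -> exp x <= 1.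
Proof. intros H. rewrite <- exp_0. apply exp_le. auto. Qed.

Definition m0 := 2 / exp 1 ^ 4.

Lemma cosh_half t : cosh_m1 t = (exp (t/2) - exp (-(t/2)))^2 / 2
  /\ exp (t/2) * exp (-(t/2)) = 1 /\ exp (t/2) * exp (t/2) = exp t
  /\ exp (-(t/2)) * exp (-(t/2)) = exp (- t).
Proof.
  assert (H1 : exp (t/2) * exp (-(t/2)) = 1).
  { rewrite <- exp_plus. replace (t/2 + - (t/2)) with 0 by field. apply exp_0. }
  assert (H2 : exp (t/2) * exp (t/2) = exp t).
  { rewrite <- exp_plus. f_equal. field. }
  assert (H3 : exp (-(t/2)) * exp (-(t/2)) = exp (-t)).
  { rewrite <- exp_plus. f_equal. field. }
  repeat split; auto.
  unfold cosh_m1, cosh. rewrite <- H2, <- H3. simpl. nra.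
Qed.

Lemma e4 : 16 <= exp 1 ^ 4.
Proof. pose proof e_gt2. assert (4 <= exp 1 ^ 2) by nra. replace (exp 1 ^ 4) with (exp 1 ^ 2 * exp 1 ^ 2) by ring. nra. Qed.

Lemma cosh_bounds t : 0 <= t -> m0 * Psi_e t <= cosh_m1 t /\ cosh_m1 t <= 2 * Psi_e t.
Proof.
  intros Ht. pose proof e_gt2 as He. pose proof e4 as He4.
  destruct (cosh_half t) as [Hc [H1 [H2 H3]]].
  set (a := exp (t/2)) in *. set (b := exp (-(t/2))) in *.
  assert (Ha : 1 <= a). { unfold a; apply exp_ge1; lra. }
  assert (Hb : b <= 1). { unfold b; apply exp_le1; lra. }
  assert (Hb0 : 0 < b) by apply exp_pos.
  destruct (Rle_dec t 2) as [Ht2|Ht2].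
  - rewrite Psi_le by auto. rewrite Hc. split.
    + assert (Hbe : 1 <= b * exp 1).
      { unfold b. rewrite <- exp_plus. apply exp_ge1. lra. }
      assert (Hab : a - b = b * (exp t - 1)).
      { rewrite <- H2. replace (b * (a*a - 1)) with ((a*b)*a - b) by ring. rewrite H1; ring. }
      pose proof (exp_ineq1_le t).
      assert (Hd : b * t <= a - b) by nra.
      assert (Hd2 : (b*t)^2 <= (a-b)^2) by (assert (0 <= b*t) by nra; nra).
      assert (Hd3 : t^2 <= (a-b)^2 * exp 1 ^ 2).
      { assert (t^2 <= (b*t)^2 * exp 1 ^2).
        { replace ((b*t)^2 * exp 1 ^2) with ((b * exp 1)^2 * t^2) by ring.
          assert (1 <= (b*exp 1)^2) by nra. pose proof (pow2_ge_0 t). nra. }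
        assert ((b*t)^2 * exp 1 ^2 <= (a-b)^2 * exp 1 ^2).
        { apply Rmult_le_compat_r; [apply pow2_ge_0|auto]. }
        lra. }
      unfold m0.
      replace (2 / exp 1 ^ 4 * (exp 1 ^ 2 / 4 * t ^ 2)) with (t^2 / (2 * exp 1 ^ 2)) by (field; lra).
      replace ((a - b) ^ 2 / 2) with (((a - b) ^ 2 * exp 1 ^ 2) / (2 * exp 1 ^ 2)) by (field; lra).
      unfold Rdiv. apply Rmult_le_compat_r; auto.
      left. apply Rinv_0_lt_compat. nra.
    + assert (Hab : a - b = a * (1 - exp (-t))).
      { rewrite <- H3. replace (a * (1 - b*b)) with (a - (a*b)*b) by ring. rewrite H1; ring. }
      pose proof (exp_ineq1_le (-t)).
      assert (Hae : a <= exp 1) by (unfold a; apply exp_le; lra).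
      assert (Hd : a - b <= exp 1 * t).
      { rewrite Hab. assert (1 - exp (-t) <= t) by lra.
        assert (0 <= 1 - exp (-t)) by nra. nra. }
      assert (0 <= a - b) by lra.
      assert ((a-b)^2 <= (exp 1 * t)^2) by nra.
      replace ((exp 1 * t)^2) with (exp 1 ^2 * t^2) in * by ring.
      lra.
  - rewrite Psi_gt by lra.
    unfold cosh_m1, cosh.
    pose proof (exp_pos (-t)).
    assert (exp (-t) <= 1) by (apply exp_le1; lra).
    assert (exp 2 <= exp t) by (apply exp_le; lra). rewrite exp2 in *.
    split.
    + assert (m0 <= /4).
      { unfold m0. apply (Rmult_le_reg_r (exp 1 ^ 4)); [lra|]. field_simplify; lra. }
      assert (m0 * exp t <= /4 * exp t) by (apply Rmult_le_compat_r; [left; apply exp_pos|auto]).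
      nra.
    + pose proof (exp_pos t). lra.
Qed.

Lemma young_Psi : young_function Psi_e.
Proof.
  pose proof e_gt2 as He.
  split; [apply Psi_convex|].
  split; [intros; apply Psi_nonneg|].
  split; [rewrite Psi_le by lra; simpl; ring|].
  split.
  - intros eps Heps. exists (Rmin 1 (eps / exp 1 ^ 2)). split.
    + apply Rmin_pos; [lra|]. apply Rdiv_lt_0_compat; nra.
    + intros u [Hu1 Hu2]. pose proof (Rmin_l 1 (eps / exp 1 ^ 2)). pose proof (Rmin_r 1 (eps / exp 1 ^ 2)).
      rewrite Psi_le by lra.
      assert (Hu : u < eps / exp 1 ^ 2) by lra.
      assert (E2 : 0 < exp 1 ^ 2) by nra.
      assert (u * exp 1 ^ 2 < eps).
      { apply (Rmult_lt_compat_r (exp 1 ^ 2)) in Hu; auto. replace (eps / exp 1 ^ 2 * exp 1 ^ 2) with eps in Hu by (field; lra). lra. }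
      assert (u^2 <= u) by nra.
      assert (exp 1 ^ 2 * u ^ 2 <= exp 1 ^ 2 * u) by (apply Rmult_le_compat_l; lra).
      lra.
  - split.
    + intros B. exists (Rmax 2 B + 1). split.
      * pose proof (Rmax_l 2 B). lra.
      * intros u Hu. pose proof (Rmax_l 2 B). pose proof (Rmax_r 2 B).
        rewrite Psi_gt by lra. pose proof (exp_ineq1_le u). lra.
    + exists 1, 3. split; [lra|]. split; [lra|].
      pose proof (Psi_strict 1 3 ltac:(lra) ltac:(lra)). lra.
Qed.

Lemma partA : young_function Psi_e /\
   exists m M, 0 < m /\ m < M /\
     forall t, 0 <= t -> m * Psi_e t <= cosh_m1 t /\ cosh_m1 t <= M * Psi_e t.
Proof.
  split; [apply young_Psi|]. exists m0, 2. pose proof e4.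
  split; [unfold m0; apply Rdiv_lt_0_compat; lra|].
  split; [|apply cosh_bounds].
  unfold m0. apply (Rmult_lt_reg_r (exp 1 ^ 4)); [lra|]. replace (2 / exp 1 ^ 4 * exp 1 ^ 4) with 2 by (field; pose proof e_gt2; lra). lra.
Qed.

Lemma fund_of_inverse (Psi phi : R -> R) :
  (forall a b, 0 <= a -> a < b -> Psi a < Psi b) ->
  (forall t, 0 < t -> 0 < phi t /\ t * Psi (/ phi t) = 1) ->
  is_fundamental_function Psi phi.
Proof.
  intros Hm Hs t Ht. destruct (Hs t Ht) as [Hp Heq]. split.
  - intros k [Hk Hle]. destruct (Rle_dec (phi t) k) as [H|H]; auto. exfalso.
    assert (H1 : / phi t < / k) by (apply Rinv_0_lt_contravar; lra).
    pose proof (Hm (/ phi t) (/ k) (Rlt_le _ _ (Rinv_0_lt_compat _ Hp)) H1).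
    assert (t * Psi (/ phi t) < t * Psi (/ k)) by (apply Rmult_lt_compat_l; auto). lra.
  - intros b Hb. apply Hb. split; auto; lra.
Qed.

Lemma phi_big t : exp (-2) <= t -> phi_e t = exp 1 / 2 * sqrt t.
Proof. intros H; unfold phi_e; destruct (Rle_dec (exp (-2)) t); lra. Qed.

Lemma phi_small t : t < exp (-2) -> phi_e t = / (- ln t).
Proof. intros H; unfold phi_e; destruct (Rle_dec (exp (-2)) t); lra. Qed.

Lemma expm1_e : exp (-1) * exp 1 = 1.
Proof. rewrite <- exp_plus. replace (-1 + 1) with 0 by ring. apply exp_0. Qed.

Lemma expm2_sq : exp (-2) = exp (-1) ^ 2.
Proof. replace (-2) with (-1 + -1) by ring. rewrite exp_plus. simpl; ring. Qed.

Lemma phi_e_spec t : 0 < t -> 0 < phi_e t /\ t * Psi_e (/ phi_e t) = 1.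
Proof.
  intros Ht. pose proof e_gt2 as He.
  destruct (Rle_dec (exp (-2)) t) as [H|H].
  - rewrite phi_big by auto.
    assert (Hs : 0 < sqrt t) by (apply sqrt_lt_R0; auto).
    assert (Hs2 : exp (-1) <= sqrt t).
    { rewrite <- (sqrt_pow2 (exp (-1))) by (left; apply exp_pos).
      apply sqrt_le_1_alt. rewrite <- expm2_sq. auto. }
    pose proof expm1_e.
    assert (Hes : 1 <= exp 1 * sqrt t) by nra.
    split; [nra|].
    rewrite Psi_le.
    + pose proof (sqrt_sqrt t (Rlt_le _ _ Ht)). field_simplify; [|split; lra].
      replace (sqrt t ^ 2) with t by (symmetry; apply pow2_sqrt; lra). field. lra.
    + replace (/ (exp 1 / 2 * sqrt t)) with (2 / (exp 1 * sqrt t)) by (field; lra).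
      apply (Rmult_le_reg_r (exp 1 * sqrt t)); [lra|].
      replace (2 / (exp 1 * sqrt t) * (exp 1 * sqrt t)) with 2 by (field; lra). lra.
  - apply Rnot_le_lt in H. rewrite phi_small by auto.
    assert (Hl : ln t < -2).
    { rewrite <- (ln_exp (-2)). apply ln_increasing; auto. }
    split; [apply Rinv_0_lt_compat; lra|].
    rewrite Rinv_inv. rewrite Psi_gt by lra. rewrite exp_Ropp, exp_ln by auto. field. lra.
Qed.

Lemma partB : is_fundamental_function Psi_e phi_e.
Proof. apply fund_of_inverse; [apply Psi_strict | apply phi_e_spec]. Qed.

Lemma q_le_exp x : 2 <= x -> exp 1 ^ 2 / 4 * x ^ 2 <= exp x.
Proof.
  intros Hx.
  assert (E1 : exp x = (exp 1 * exp (x/2 - 1))^2).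
  { simpl. rewrite Rmult_1_r. rewrite <- !exp_plus. f_equal. field. }
  pose proof (exp_ineq1_le (x/2 - 1)).
  assert (x/2 <= exp (x/2 - 1)) by lra.
  pose proof e_gt2.
  assert (0 <= exp 1 * (x/2) <= exp 1 * exp (x/2-1)) by (split; nra).
  rewrite E1. replace (exp 1 ^ 2 / 4 * x ^ 2) with ((exp 1 * (x/2))^2) by field.
  nra.
Qed.

Lemma Psi_scale l x : 0 < l <= 1 -> 0 <= x -> Psi_e (l * x) <= l ^ 2 * Psi_e x.
Proof.
  intros Hl Hx. pose proof e_gt2 as He.
  destruct (Rle_dec x 2) as [Hx2|Hx2].
  - rewrite !Psi_le by nra. right; field.
  - rewrite (Psi_gt x) by lra. destruct (Rle_dec (l * x) 2) as [Hy|Hy].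
    + rewrite Psi_le by auto. pose proof (q_le_exp x ltac:(lra)).
      replace (exp 1 ^ 2 / 4 * (l * x) ^ 2) with (l^2 * (exp 1 ^ 2 / 4 * x ^ 2)) by field.
      apply Rmult_le_compat_l; auto. nra.
    + rewrite Psi_gt by lra.
      set (mu := / l).
      assert (Hmu : mu * l = 1) by (unfold mu; field; lra).
      assert (Hmu1 : 1 <= mu) by (unfold mu; rewrite <- Rinv_1; apply Rinv_le_contravar; lra).
      assert (Ex : exp x = exp (l * x) * exp ((1 - l) * x)) by (rewrite <- exp_plus; f_equal; ring).
      assert (H1 : 2 * (mu - 1) <= (1 - l) * x).
      { replace ((1 - l) * x) with ((mu - 1) * (l * x)) by (transitivity ((mu*l)*x - l*x); [ring | rewrite Hmu; ring]). nra. }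
      assert (H2 : exp (2 * (mu - 1)) <= exp ((1 - l) * x)) by (apply exp_le; auto).
      assert (H3 : exp (2 * (mu - 1)) = exp (mu - 1) ^ 2) by (simpl; rewrite Rmult_1_r, <- exp_plus; f_equal; ring).
      pose proof (exp_ineq1_le (mu - 1)).
      assert (mu ^ 2 <= exp ((1 - l) * x)) by nra.
      rewrite Ex. pose proof (exp_pos (l * x)).
      assert (l^2 * mu^2 = 1) by (replace (l^2*mu^2) with ((mu*l)^2) by ring; rewrite Hmu; ring).
      assert (l ^ 2 * mu ^ 2 <= l ^ 2 * exp ((1 - l) * x)) by (apply Rmult_le_compat_l; nra).
      nra.
Qed.

Lemma glb_mono (Psi phi : R -> R) :
  (forall u, 0 <= u -> 0 <= Psi u) -> is_fundamental_function Psi phi ->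
  forall s t, 0 < s <= 1 -> 0 < t -> phi (s * t) <= phi t.
Proof.
  intros Hn Hf s t Hs Ht.
  destruct (Hf t Ht) as [_ Hg]. apply Hg.
  intros k [Hk Hle]. destruct (Hf (s * t) ltac:(nra)) as [Hl _]. apply Hl.
  split; auto.
  assert (0 <= Psi (/ k)) by (apply Hn; left; apply Rinv_0_lt_compat; auto).
  nra.
Qed.

Lemma glb_compare (Psi1 Psi2 phi1 phi2 : R -> R) a :
  0 < a -> (forall x, 0 <= x -> a * Psi1 x <= Psi2 x) ->
  is_fundamental_function Psi1 phi1 -> is_fundamental_function Psi2 phi2 ->
  forall t, 0 < t -> phi1 (a * t) <= phi2 t.
Proof.
  intros Ha Hc H1 H2 t Ht.
  destruct (H2 t Ht) as [_ Hg]. apply Hg.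
  intros k [Hk Hle]. destruct (H1 (a * t) ltac:(nra)) as [Hl _]. apply Hl.
  split; auto.
  pose proof (Hc (/ k) ltac:(left; apply Rinv_0_lt_compat; auto)). nra.
Qed.

Lemma phi_e_P3 s t : 1 <= s -> 0 < t -> phi_e (s * t) <= sqrt s * phi_e t.
Proof.
  intros Hs Ht. destruct (phi_e_spec t Ht) as [Hp Heq].
  destruct (partB (s * t) ltac:(nra)) as [Hl _]. apply Hl.
  assert (Hss : 1 <= sqrt s) by (rewrite <- sqrt_1; apply sqrt_le_1_alt; auto).
  split; [nra|].
  replace (/ (sqrt s * phi_e t)) with (/ sqrt s * / phi_e t) by (field; lra).
  assert (Hl1 : 0 < / sqrt s <= 1).
  { split; [apply Rinv_0_lt_compat; lra|]. rewrite <- Rinv_1. apply Rinv_le_contravar; lra. }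
  pose proof (Psi_scale (/ sqrt s) (/ phi_e t) Hl1 ltac:(left; apply Rinv_0_lt_compat; auto)).
  assert (E : s * (/ sqrt s) ^ 2 = 1).
  { rewrite <- (pow2_sqrt s) at 1 by lra. field. lra. }
  assert (s * t * Psi_e (/ sqrt s * / phi_e t) <= s * t * ((/ sqrt s) ^ 2 * Psi_e (/ phi_e t))).
  { apply Rmult_le_compat_l; [nra|auto]. }
  replace (s * t * ((/ sqrt s) ^ 2 * Psi_e (/ phi_e t))) with ((s * (/ sqrt s) ^ 2) * (t * Psi_e (/ phi_e t))) in H0 by ring.
  rewrite E, Heq in H0. lra.
Qed.

Lemma L1 p q b : 0 < p -> 0 < q -> b < 1 ->
  exists t, 0 < t /\ b < phi_e (p * t) / phi_e (q * t).
Proof.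
  intros Hp Hq Hb.
  set (A := Rabs (ln p) + Rabs (ln q)).
  set (u := 3 + A + A / (1 - b)).
  assert (HA : 0 <= A) by (unfold A; pose proof (Rabs_pos (ln p)); pose proof (Rabs_pos (ln q)); lra).
  assert (HD : 0 <= A / (1 - b)) by (unfold Rdiv; apply Rmult_le_pos; [lra|left; apply Rinv_0_lt_compat; lra]).
  pose proof (Rle_abs (ln p)) as Ap1. pose proof (Rle_abs (- ln p)) as Ap2. rewrite Rabs_Ropp in Ap2.
  pose proof (Rle_abs (ln q)) as Aq1. pose proof (Rle_abs (- ln q)) as Aq2. rewrite Rabs_Ropp in Aq2.
  exists (exp (- u)). split; [apply exp_pos|].
  assert (Ep : p * exp (- u) = exp (ln p - u)) by (unfold Rminus; rewrite exp_plus, exp_ln; auto).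
  assert (Eq : q * exp (- u) = exp (ln q - u)) by (unfold Rminus; rewrite exp_plus, exp_ln; auto).
  rewrite Ep, Eq.
  rewrite !phi_small by (apply exp_increasing; unfold u, A in *; lra).
  rewrite !ln_exp.
  assert (HX : 0 < - (ln p - u)) by (unfold u, A in *; lra).
  assert (HY : 0 < - (ln q - u)) by (unfold u, A in *; lra).
  replace (/ - (ln p - u) / / - (ln q - u)) with ((- (ln q - u)) / (- (ln p - u))) by (field; lra).
  destruct (Rle_dec b 0) as [Hb0|Hb0].
  - assert (0 < - (ln q - u) / - (ln p - u)) by (apply Rdiv_lt_0_compat; auto). lra.
  - apply (Rmult_lt_reg_r (- (ln p - u))); auto.
    replace (- (ln q - u) / - (ln p - u) * - (ln p - u)) with (- (ln q - u)) by (field; lra).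
    assert (Hu : (1 - b) * u = 3 * (1 - b) + (1 - b) * A + A) by (unfold u; field; lra).
    assert (b * ln p >= - Rabs (ln p)) by nra.
    unfold A in *. nra.
Qed.

Lemma phi_e_pos t : 0 < t -> 0 < phi_e t.
Proof. intros H; apply (phi_e_spec t H). Qed.

Lemma expm2_le1 : exp (-2) <= 1.
Proof. apply exp_le1; lra. Qed.

Lemma partC : forall s, 0 < s -> is_lub (fun r => exists t, 0 < t /\ r = phi_e (s * t) / phi_e t)
                        (if Rle_dec s 1 then 1 else sqrt s).
Proof.
  intros s Hs. destruct (Rle_dec s 1) as [H1|H1].
  - split.
    + intros r [t [Ht ->]]. pose proof (phi_e_pos t Ht).
      pose proof (glb_mono Psi_e phi_e (fun u _ => Psi_nonneg u) partB s t ltac:(lra) Ht).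
      apply (Rmult_le_reg_r (phi_e t)); auto. field_simplify; lra.
    + intros b Hb. destruct (Rle_dec 1 b) as [|Hb1]; auto. exfalso.
      destruct (L1 s 1 b Hs ltac:(lra) ltac:(lra)) as [t [Ht Hlt]].
      rewrite Rmult_1_l in Hlt.
      assert (phi_e (s * t) / phi_e t <= b) by (apply Hb; exists t; auto). lra.
  - split.
    + intros r [t [Ht ->]]. pose proof (phi_e_pos t Ht).
      pose proof (phi_e_P3 s t ltac:(lra) Ht).
      apply (Rmult_le_reg_r (phi_e t)); auto. field_simplify; lra.
    + intros b Hb. apply Hb. exists 1. split; [lra|].
      pose proof expm2_le1. pose proof e_gt2.
      rewrite Rmult_1_r, !phi_big by lra. rewrite sqrt_1. field. lra.
Qed.

Lemma sqrt_pow_n s n : 0 <= s -> sqrt (s ^ n) = sqrt s ^ n.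
Proof.
  intros Hs. induction n as [|n IH]; simpl; [apply sqrt_1|].
  rewrite sqrt_mult; [rewrite IH; auto | auto | apply pow_le; auto].
Qed.

Lemma ln_pos x : 1 < x -> 0 < ln x.
Proof. intros H. rewrite <- ln_1. apply ln_increasing; lra. Qed.

Lemma ln_sqrt2 s : 0 < s -> ln s = 2 * ln (sqrt s).
Proof.
  intros H. pose proof (sqrt_lt_R0 s H).
  rewrite <- (sqrt_sqrt s) at 1 by lra. rewrite ln_mult by auto. ring.
Qed.

Lemma dil_indices (phi : R -> R) :
 (forall t, 0 < t -> 0 < phi t) ->
 (forall s t, 0 < s <= 1 -> 0 < t -> phi (s*t) <= phi t) ->
 (exists K, 1 <= K /\ forall s t, 1 < s -> 0 < t -> phi (s*t) <= K * sqrt s * phi t) ->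
 (exists c, 0 < c /\ forall s, 1 < s -> exists t, 0 < t /\ c * sqrt s * phi t <= phi (s*t)) ->
 (forall s b, 0 < s < 1 -> b < 1 -> exists t, 0 < t /\ b < phi (s*t) / phi t) ->
 exists Mf, is_dilation_function phi Mf /\ is_upper_index Mf (1/2) /\ is_lower_index Mf 0.
Proof.
  intros P1 P2 [K [HK P3]] [c [Hc P4]] P5.
  set (E := fun s r => exists t, 0 < t /\ r = phi (s * t) / phi t).
  assert (Hratio : forall s t, 0 < s -> 0 < t -> 0 < phi (s * t) / phi t).
  { intros s t Hs Ht. apply Rdiv_lt_0_compat; apply P1; nra. }
  assert (Hub : forall s, 0 < s -> is_upper_bound (E s) (if Rle_dec s 1 then 1 else K * sqrt s)).
  { intros s Hs r [t [Ht ->]]. pose proof (P1 t Ht).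
    destruct (Rle_dec s 1).
    - pose proof (P2 s t ltac:(lra) Ht). apply (Rmult_le_reg_r (phi t)); auto. field_simplify; lra.
    - pose proof (P3 s t ltac:(lra) Ht). apply (Rmult_le_reg_r (phi t)); auto. field_simplify; lra. }
  assert (X : forall s, {m | 0 < s -> is_lub (E s) m}).
  { intros s. destruct (Rlt_dec 0 s) as [Hs|Hs].
    - destruct (completeness (E s)) as [m Hm].
      + exists (if Rle_dec s 1 then 1 else K * sqrt s). apply Hub; auto.
      + exists (phi (s * 1) / phi 1). exists 1. split; auto; lra.
      + exists m. auto.
    - exists 0. intros; lra. }
  set (Mf := fun s => proj1_sig (X s)).
  assert (HM : forall s, 0 < s -> is_lub (E s) (Mf s)) by (intros s Hs; exact (proj2_sig (X s) Hs)).
  assert (Mub : forall s t, 0 < s -> 0 < t -> phi (s * t) / phi t <= Mf s).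
  { intros s t Hs Ht. apply (HM s Hs). exists t; auto. }
  assert (Mpos : forall s, 0 < s -> 0 < Mf s).
  { intros s Hs. pose proof (Mub s 1 Hs ltac:(lra)). pose proof (Hratio s 1 Hs ltac:(lra)). lra. }
  assert (Mle : forall s, 0 < s -> Mf s <= (if Rle_dec s 1 then 1 else K * sqrt s)).
  { intros s Hs. apply (HM s Hs). apply Hub; auto. }
  assert (Mge1 : forall s, 0 < s < 1 -> 1 <= Mf s).
  { intros s Hs. destruct (Rle_dec 1 (Mf s)) as [|Hn]; auto. exfalso.
    destruct (P5 s (Mf s) Hs ltac:(lra)) as [t [Ht Hlt]].
    pose proof (Mub s t ltac:(lra) Ht). lra. }
  assert (Mc : forall s, 1 < s -> c * sqrt s <= Mf s).
  { intros s Hs. destruct (P4 s Hs) as [t [Ht Hle]]. pose proof (Mub s t ltac:(lra) Ht).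
    pose proof (P1 t Ht).
    assert (c * sqrt s <= phi (s * t) / phi t).
    { apply (Rmult_le_reg_r (phi t)); auto. field_simplify; lra. }
    lra. }
  assert (Msub : forall s1 s2, 0 < s1 -> 0 < s2 -> Mf (s1 * s2) <= Mf s1 * Mf s2).
  { intros s1 s2 H1 H2. apply (HM (s1 * s2) ltac:(nra)).
    intros r [t [Ht ->]].
    assert (Hst : 0 < s2 * t) by nra.
    pose proof (P1 _ Hst). pose proof (P1 t Ht).
    replace (phi (s1 * s2 * t) / phi t) with ((phi (s1 * (s2 * t)) / phi (s2 * t)) * (phi (s2 * t) / phi t))
      by (rewrite Rmult_assoc; field; lra).
    apply Rmult_le_compat.
    - left; apply Hratio; auto.
    - left; apply Hratio; auto.
    - apply Mub; auto.
    - apply Mub; auto. }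
  assert (Mpow : forall s n, 0 < s -> Mf (s ^ n) <= Mf s ^ n).
  { intros s n Hs. induction n as [|n IH].
    - simpl. pose proof (Mle 1 ltac:(lra)). destruct (Rle_dec 1 1); lra.
    - simpl. pose proof (pow_lt s n Hs).
      pose proof (Msub s (s ^ n) Hs H).
      pose proof (Mpos s Hs).
      assert (Mf s * Mf (s ^ n) <= Mf s * Mf s ^ n) by (apply Rmult_le_compat_l; lra).
      lra. }
  assert (Msqrt : forall s, 1 < s -> sqrt s <= Mf s).
  { intros s Hs. destruct (Rle_dec (sqrt s) (Mf s)) as [|Hn]; auto. exfalso.
    assert (Hq : 0 < sqrt s) by (apply sqrt_lt_R0; lra).
    set (x := Mf s / sqrt s).
    assert (Hx0 : 0 < x) by (unfold x; apply Rdiv_lt_0_compat; auto; apply Mpos; lra).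
    assert (Hx1 : x < 1).
    { unfold x. apply (Rmult_lt_reg_r (sqrt s)); auto. field_simplify; lra. }
    destruct (pow_lt_1_zero x ltac:(rewrite Rabs_pos_eq; lra) c Hc) as [N HN].
    specialize (HN (S N) ltac:(lia)). rewrite Rabs_pos_eq in HN by (apply pow_le; lra).
    assert (Hsn : 1 < s ^ S N) by (apply Rlt_pow_R1; [lra|lia]).
    pose proof (Mc _ Hsn). pose proof (Mpow s (S N) ltac:(lra)).
    rewrite sqrt_pow_n in H by lra.
    assert (Mf s = x * sqrt s) by (unfold x; field; lra).
    rewrite H1, Rpow_mult_distr in H0.
    assert (0 < sqrt s ^ S N) by (apply pow_lt; auto).
    assert (c <= x ^ S N) by nra.
    lra. }
  exists Mf. split; [|split].
  - intros s Hs. apply HM; auto.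
  - split.
    + intros r [s [Hs ->]]. pose proof (Msqrt s Hs). pose proof (ln_pos s Hs).
      assert (Hq : 0 < sqrt s) by (apply sqrt_lt_R0; lra).
      pose proof (ln_le _ _ Hq H). rewrite (ln_sqrt2 s) by lra.
      apply (Rmult_le_reg_r (2 * ln (sqrt s))). { rewrite <- ln_sqrt2 by lra; lra. }
      assert (0 < ln (sqrt s)) by (rewrite (ln_sqrt2 s) in H0 by lra; lra).
      replace (ln (Mf s) / (2 * ln (sqrt s)) * (2 * ln (sqrt s))) with (ln (Mf s)) by (field; lra).
      lra.
    + intros b Hb. destruct (Rle_dec b (1/2)) as [|Hn]; auto. exfalso.
      assert (HlK : 0 <= ln K) by (rewrite <- ln_1; apply ln_le; lra).
      set (L := 2 * ln K / (b - 1/2) + 1).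
      assert (HL : 1 <= L).
      { unfold L. assert (0 <= 2 * ln K / (b - 1/2)) by (apply Rmult_le_pos; [lra| left; apply Rinv_0_lt_compat; lra]). lra. }
      assert (Hs : 1 < exp L) by (pose proof (exp_ineq1 L ltac:(lra)); lra).
      assert (Hb' : b <= ln (Mf (exp L)) / ln (exp L)) by (apply Hb; exists (exp L); auto).
      rewrite ln_exp in Hb'.
      pose proof (Mle (exp L) ltac:(lra)). destruct (Rle_dec (exp L) 1); [lra|].
      pose proof (Mpos (exp L) ltac:(lra)).
      assert (Hq : 0 < sqrt (exp L)) by (apply sqrt_lt_R0; lra).
      pose proof (ln_le _ _ H0 H).
      rewrite ln_mult in H1 by lra.
      assert (ln (sqrt (exp L)) = L / 2).
      { pose proof (ln_sqrt2 (exp L) ltac:(lra)). rewrite ln_exp in H2. lra. }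
      rewrite H2 in H1.
      assert (b * L <= ln (Mf (exp L))).
      { apply (Rmult_le_compat_r L) in Hb'; [|lra]. field_simplify in Hb'; lra. }
      assert ((b - 1/2) * L = 2 * ln K + (b - 1/2)) by (unfold L; field; lra).
      nra.
  - split.
    + intros r [s [Hs ->]]. pose proof (Mle s ltac:(lra)). destruct (Rle_dec s 1); [|lra].
      pose proof (Mge1 s Hs). replace (Mf s) with 1 by lra. rewrite ln_1. right; unfold Rdiv; ring.
    + intros b Hb. apply Hb. exists (1/2). split; [lra|].
      pose proof (Mle (1/2) ltac:(lra)). destruct (Rle_dec (1/2) 1); [|lra].
      pose proof (Mge1 (1/2) ltac:(lra)). replace (Mf (1/2)) with 1 by lra. rewrite ln_1. unfold Rdiv; ring.
Qed.

Definition acosh (y : R) := ln (y + sqrt (y * y - 1)).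
Definition phi_C (t : R) := / acosh (1 + / t).

Lemma acosh_spec y : 1 < y -> 0 < acosh y /\ cosh (acosh y) = y.
Proof.
  intros Hy. unfold acosh.
  assert (Hr : 0 <= sqrt (y * y - 1)) by apply sqrt_pos.
  assert (Hrr : sqrt (y * y - 1) * sqrt (y * y - 1) = y * y - 1) by (apply sqrt_sqrt; nra).
  set (r := sqrt (y * y - 1)) in *.
  split.
  - apply ln_pos. lra.
  - unfold cosh. rewrite exp_Ropp, exp_ln by lra.
    assert (/ (y + r) = y - r).
    { apply (Rmult_eq_reg_l (y + r)); [|lra]. field_simplify; [nra|lra]. }
    rewrite H. field.
Qed.

Lemma cosh_strict a b : 0 <= a -> a < b -> cosh_m1 a < cosh_m1 b.
Proof.
  intros Ha Hab. unfold cosh_m1, cosh. rewrite !exp_Ropp.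
  pose proof (exp_ge1 a Ha). pose proof (exp_increasing a b Hab).
  set (A := exp a) in *. set (B := exp b) in *.
  assert (/ A - / B = (B - A) * / (A * B)) by (field; lra).
  assert (/ (A * B) < 1). { rewrite <- Rinv_1. apply Rinv_lt_contravar; nra. }
  assert ((B - A) * / (A * B) < (B - A)) by nra.
  lra.
Qed.

Lemma cosh_nonneg u : 0 <= u -> 0 <= cosh_m1 u.
Proof.
  intros H. destruct (cosh_bounds u H) as [H1 _]. pose proof (Psi_nonneg u).
  assert (0 < m0) by (unfold m0; pose proof e4; apply Rdiv_lt_0_compat; lra). nra.
Qed.

Lemma phi_C_spec t : 0 < t -> 0 < phi_C t /\ t * cosh_m1 (/ phi_C t) = 1.
Proof.
  intros Ht. assert (Hy : 1 < 1 + / t) by (pose proof (Rinv_0_lt_compat t Ht); lra).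
  destruct (acosh_spec _ Hy) as [H1 H2]. unfold phi_C.
  split; [apply Rinv_0_lt_compat; auto|].
  rewrite Rinv_inv. unfold cosh_m1. rewrite H2. field. lra.
Qed.

Lemma fund_C : is_fundamental_function cosh_m1 phi_C.
Proof. apply fund_of_inverse; [apply cosh_strict | apply phi_C_spec]. Qed.

Lemma m0_pos : 0 < m0.
Proof. unfold m0; pose proof e4; apply Rdiv_lt_0_compat; lra. Qed.

Lemma m0_inv : 16 <= 2 / m0.
Proof. unfold m0. pose proof e4. replace (2 / (2 / exp 1 ^ 4)) with (exp 1 ^ 4) by (field; pose proof e_gt2; lra). lra. Qed.

Lemma cmp1 t : 0 < t -> phi_e (m0 * t) <= phi_C t.
Proof.
  intros Ht. apply (glb_compare Psi_e cosh_m1 phi_e phi_C m0 m0_pos); auto.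
  - intros x Hx. apply cosh_bounds; auto.
  - apply partB.
  - apply fund_C.
Qed.

Lemma cmp2 t : 0 < t -> phi_C t <= phi_e (2 * t).
Proof.
  intros Ht. replace t with (/2 * (2 * t)) at 1 by field.
  apply (glb_compare cosh_m1 Psi_e phi_C phi_e (/2)); try lra.
  - intros x Hx. destruct (cosh_bounds x Hx). lra.
  - apply fund_C.
  - apply partB.
Qed.

Lemma ratio_mono a b a' b' : 0 < a <= a' -> 0 < b' <= b -> a / b <= a' / b'.
Proof.
  intros [Ha Haa] [Hb Hbb]. unfold Rdiv. apply Rmult_le_compat; try lra.
  - left; apply Rinv_0_lt_compat; lra.
  - apply Rinv_le_contravar; lra.
Qed.

Lemma partD : forall Psi, (Psi = Psi_e \/ Psi = cosh_m1) ->
     exists phi Mf, is_fundamental_function Psi phi /\ is_dilation_function phi Mf /\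
       is_upper_index Mf (1/2) /\ is_lower_index Mf 0.
Proof.
  intros Psi [->| ->].
  - exists phi_e.
    destruct (dil_indices phi_e) as [Mf HM].
    + apply phi_e_pos.
    + apply (glb_mono Psi_e phi_e (fun u _ => Psi_nonneg u) partB).
    + exists 1. split; [lra|]. intros s t Hs Ht. rewrite Rmult_1_l. apply phi_e_P3; lra.
    + exists 1. split; [lra|]. intros s Hs. exists 1. split; [lra|].
      pose proof expm2_le1.
      rewrite Rmult_1_r, !phi_big by lra. rewrite sqrt_1. lra.
    + intros s b Hs Hb. destruct (L1 s 1 b ltac:(lra) ltac:(lra) Hb) as [t [Ht H]].
      exists t. rewrite Rmult_1_l in H. auto.
    + exists Mf. split; [apply partB|]. auto.
  - exists phi_C.
    pose proof m0_pos as Hm. pose proof m0_inv as Hmi.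
    assert (HC : forall t, 0 < t -> 0 < phi_C t) by (intros t Ht; apply (phi_C_spec t Ht)).
    destruct (dil_indices phi_C) as [Mf HM].
    + auto.
    + apply (glb_mono cosh_m1 phi_C cosh_nonneg fund_C).
    + exists (sqrt (2 / m0)). split.
      { rewrite <- sqrt_1. apply sqrt_le_1_alt. lra. }
      intros s t Hs Ht.
      pose proof (cmp2 (s * t) ltac:(nra)).
      assert (H2m : 1 <= 2 * s / m0) by (replace (2*s/m0) with (2/m0*s) by (field; lra); nra).
      pose proof (phi_e_P3 (2 * s / m0) (m0 * t) H2m ltac:(nra)).
      replace (2 * s / m0 * (m0 * t)) with (2 * (s * t)) in H0 by (field; lra).
      pose proof (cmp1 t Ht).
      replace (2 * s / m0) with (2 / m0 * s) in H0 by (field; lra).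
      rewrite sqrt_mult in H0 by nra.
      assert (0 <= sqrt (2 / m0) * sqrt s) by (apply Rmult_le_pos; apply sqrt_pos).
      assert (sqrt (2 / m0) * sqrt s * phi_e (m0 * t) <= sqrt (2 / m0) * sqrt s * phi_C t)
        by (apply Rmult_le_compat_l; auto).
      lra.
    + exists (/ sqrt (2 / m0)).
      assert (Hq : 0 < sqrt (2 / m0)) by (apply sqrt_lt_R0; lra).
      split; [apply Rinv_0_lt_compat; auto|].
      intros s Hs. exists (1 / m0). split; [apply Rdiv_lt_0_compat; lra|].
      pose proof (cmp2 (1 / m0) ltac:(apply Rdiv_lt_0_compat; lra)).
      pose proof (cmp1 (s * (1 / m0)) ltac:(apply Rmult_lt_0_compat; [lra|apply Rdiv_lt_0_compat; lra])).
      replace (m0 * (s * (1 / m0))) with s in H0 by (field; lra).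
      replace (2 * (1 / m0)) with (2 / m0) in H by (field; lra).
      pose proof expm2_le1. pose proof e_gt2.
      rewrite phi_big in H by lra. rewrite phi_big in H0 by lra.
      assert (Hs0 : 0 <= sqrt s) by apply sqrt_pos.
      assert (/ sqrt (2 / m0) * sqrt s * phi_C (1 / m0) <= / sqrt (2 / m0) * sqrt s * (exp 1 / 2 * sqrt (2 / m0))).
      { apply Rmult_le_compat_l; auto. apply Rmult_le_pos; auto. left; apply Rinv_0_lt_compat; auto. }
      replace (/ sqrt (2 / m0) * sqrt s * (exp 1 / 2 * sqrt (2 / m0))) with (exp 1 / 2 * sqrt s) in H3 by (field; lra).
      lra.
    + intros s b Hs Hb.
      destruct (L1 (m0 * s) 2 b ltac:(nra) ltac:(lra) Hb) as [t [Ht H]].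
      exists t. split; auto.
      eapply Rlt_le_trans; [apply H|].
      apply ratio_mono.
      * split; [apply phi_e_pos; destruct Hs; apply Rmult_lt_0_compat; [apply Rmult_lt_0_compat|]; lra|]. rewrite Rmult_assoc. apply cmp1. destruct Hs; apply Rmult_lt_0_compat; lra.
      * split; [apply HC; auto|]. apply cmp2; auto.
    + exists Mf. split; [apply fund_C|]. auto.
Qed.

Theorem mainTheorem9 :
  (* (a) *)
  (young_function Psi_e /\
   exists m M, 0 < m /\ m < M /\
     forall t, 0 <= t -> m * Psi_e t <= cosh_m1 t /\ cosh_m1 t <= M * Psi_e t) /\
  (* (b) *)
  is_fundamental_function Psi_e phi_e /\
  (* (c) *)
  (forall s, 0 < s -> is_lub (fun r => exists t, 0 < t /\ r = phi_e (s * t) / phi_e t)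
                        (if Rle_dec s 1 then 1 else sqrt s)) /\
  (* (d) *)
  (forall Psi, (Psi = Psi_e \/ Psi = cosh_m1) ->
     exists phi Mf, is_fundamental_function Psi phi /\ is_dilation_function phi Mf /\
       is_upper_index Mf (1/2) /\ is_lower_index Mf 0).
Proof.
  split; [exact partA|]. split; [exact partB|]. split; [exact partC|]. exact partD.
Qed.
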